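(* Let $\mathbf b^{(1)}=(b_5^{-1},b_6^{-1},b_7^{-1},b_8^{-1},b_1^{-1},b_2^{-1},b_3^{-1},b_4^{-1})$. Then, as identities of formal series in $t$ whose coefficients are Laurent series in $\phi$, $$f^{0,+}(t,\phi;\Lambda,\mathbf b)\,f^{0,+}\!\Big(t,\frac1{t\phi};\frac1\Lambda,\mathbf b^{(1)}\Big)=t,\qquad g^{0,+}(t,\phi;\Lambda,\mathbf b)\,g^{0,+}\!\Big(t,\frac1{t\phi};\frac1\Lambda,\mathbf b^{(1)}\Big)=t,$$ where $f^{0,+}(t,\psi;\Lambda',\mathbf b')=\sum_{n\ge1}\sum_{i\le n}F^{0,+}_{n,i}(\Lambda',\mathbf b')\psi^it^n$ (similarly for $g^{0,+}$), and the substitution $\psi=1/(t\phi)$ is made termwise (the coefficient of each $t^m$ is then a Laurent series in $\phi$ with exponents $\le m-1$).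
   Context: Parameters $\mathbf b=(b_1,\dots,b_8)\in(\mathbb C^* )^8$, $q=\frac{b_1b_2b_3b_4}{b_5b_6b_7b_8}$ (note $q(\mathbf b^{(1)})=q(\mathbf b)$). The equation $q$-$P(A_1)$ for $f=f(t)$, $g=g(t)$ is $$(gf-t^2)(g\bar f-qt^2)(g-b_5)(g-b_6)(g-b_7)(g-b_8)=(gf-1)(g\bar f-1)(g-b_1t)(g-b_2t)(g-b_3t)(g-b_4t),$$ $$(g\bar f-qt^2)(\bar g\bar f-q^2t^2)(\bar f-b_5^{-1})(\bar f-b_6^{-1})(\bar f-b_7^{-1})(\bar f-b_8^{-1})=(g\bar f-1)(\bar g\bar f-1)(\bar f-b_1^{-1}qt)(\bar f-b_2^{-1}qt)(\bar f-b_3^{-1}qt)(\bar f-b_4^{-1}qt).$$ Formal setting: $\Lambda,\phi$ are indeterminates, $\lambda=\Lambda^2/(b_1b_2b_3b_4)$; formal solutions are pairs $f=\sum_{n\ge1}\sum_{i\le n}F_{n,i}\phi^it^n$, $g=\sum_{n\ge1}\sum_{i\le n}G_{n,i}\phi^it^n$ with coefficients rational in $(\Lambda,\mathbf b)$ satisfying both equations identically under the shift $t\mapsto qt$, $\phi\mapsto\lambda\phi$, $\Lambda\mapsto\Lambda$. $(f^{0,+}(t,\phi;\Lambda,\mathbf b),g^{0,+}(t,\phi;\Lambda,\mathbf b))$ denotes the unique such solution with $F_{1,1}=1$, $G_{1,1}=\Lambda$, with coefficients $F^{0,+}_{n,i}(\Lambda,\mathbf b),G^{0,+}_{n,i}(\Lambda,\mathbf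 b)$. *)

(* Defs.v *)
From HB Require Import structures.
From mathcomp Require Import all_boot all_order all_algebra.
Set Implicit Arguments. Unset Strict Implicit. Unset Printing Implicit Defensive.
Import Order.TTheory GRing.Theory Num.Theory.
Local Open Scope ring_scope.

(* The coefficient field Q(Lambda, b_1, ..., b_8) of rational functions *)
(* in 9 indeterminates, built as the fraction field of a 9-fold        *)
(* iterated polynomial ring over Q.                                    *)
Fixpoint mpoly (n : nat) : idomainType :=
  match n with
  | 0 => rat
  | m.+1 => ({poly mpoly m} : idomainType)
  end.

Fixpoint mvar (n k : nat) {struct n} : mpoly n :=
  match n return mpoly n with
  | 0 => 0
  | m.+1 => if k is k'.+1 then ((mvar m k')%:P : {poly mpoly m}) else ('X : {poly mpoly m})
  end.

Definition Kgen : fieldType := {fraction (mpoly 9)}.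
Definition tofracK (x : mpoly 9) : Kgen := FracField.tofrac x.

Definition Lgen : Kgen := tofracK (mvar 9 0).
Definition bgen (i : 'I_8) : Kgen := tofracK (mvar 9 i.+1).

(* Parameters.  b : 'I_8 -> K, with b i standing for b_(i+1).           *)
Section Params.
Variable K : fieldType.

Definition qpar (b : 'I_8 -> K) : K :=
  (b (inord 0) * b (inord 1) * b (inord 2) * b (inord 3)) /
  (b (inord 4) * b (inord 5) * b (inord 6) * b (inord 7)).

Definition lampar (L : K) (b : 'I_8 -> K) : K :=
  L ^+ 2 / (b (inord 0) * b (inord 1) * b (inord 2) * b (inord 3)).

Definition bdual (b : 'I_8 -> K) : 'I_8 -> K :=
  fun i => (b (inord ((i + 4) %% 8)))^-1.

(* Formal series  sum_{n >= 0} sum_{i : int} A n i phi^i t^n  whose      *)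
(* coefficient of t^n is a Laurent series in phi with exponents <= n.  *)
(* A series is represented by its coefficient array A n i (t^n phi^i). *)
Definition ser := nat -> int -> K.

Definition supp_ok (A : ser) : Prop := forall (n : nat) (i : int), n%:Z < i -> A n i = 0.

Definition smon (c : K) (k : nat) : ser :=
  fun n i => if (n == k) && (i == 0) then c else 0.

Definition sadd (A B : ser) : ser := fun n i => A n i + B n i.
Definition ssub (A B : ser) : ser := fun n i => A n i - B n i.

(* Cauchy product; for series with A n i = 0 when i > n the defining    *)
(* double sum  sum_{n+m=k} sum_i A n i B m (j-i)  has only the terms     *)
(* i = n - e, 0 <= e <= k - j, listed here.                              *)
Definition smul (A B : ser) : ser := fun k j =>
  if k%:Z < j then 0 else
  \sum_(n < k.+1) \sum_(e < (absz (k%:Z - j)).+1)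
     A n (n%:Z - e%:Z) * B (k - n)%N (j - n%:Z + e%:Z).

(* the shift  t -> q t, phi -> lambda phi *)
Definition sshift (q lam : K) (A : ser) : ser :=
  fun n i => q ^+ n * lam ^ i * A n i.

(* termwise substitution  phi -> 1/(t phi):                               *)
(* A n i phi^i t^n  |->  A n i phi^(-i) t^(n-i);                           *)
(* so the coefficient of t^m phi^j is A (m - j) (- j)  (0 if j > m).      *)
Definition sinv (A : ser) : ser := fun m j =>
  if m%:Z < j then 0 else A (absz (m%:Z - j)) (- j).

Definition tser : ser := smon 1 1.

Definition qPA1 (L : K) (b : 'I_8 -> K) (f g : ser) : Prop :=
  let q := qpar b in
  let lam := lampar L b in
  let fb := sshift q lam f in
  let gb := sshift q lam g in
  let c := fun x : K => smon x 0 in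
  let B := fun k : nat => b (inord k) in
  smul (ssub (smul g f) (smon 1 2))
  (smul (ssub (smul g fb) (smon q 2))
  (smul (ssub g (c (B 4)))
  (smul (ssub g (c (B 5)))
  (smul (ssub g (c (B 6)))
        (ssub g (c (B 7)))))))
  =
  smul (ssub (smul g f) (c 1))
  (smul (ssub (smul g fb) (c 1))
  (smul (ssub g (smon (B 0) 1))
  (smul (ssub g (smon (B 1) 1))
  (smul (ssub g (smon (B 2) 1))
        (ssub g (smon (B 3) 1))))))
  /\
  smul (ssub (smul g fb) (smon q 2))
  (smul (ssub (smul gb fb) (smon (q ^+ 2) 2))
  (smul (ssub fb (c (B 4)^-1))
  (smul (ssub fb (c (B 5)^-1))
  (smul (ssub fb (c (B 6)^-1))
        (ssub fb (c (B 7)^-1))))))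
  =
  smul (ssub (smul g fb) (c 1))
  (smul (ssub (smul gb fb) (c 1))
  (smul (ssub fb (smon ((B 0)^-1 * q) 1))
  (smul (ssub fb (smon ((B 1)^-1 * q) 1))
  (smul (ssub fb (smon ((B 2)^-1 * q) 1))
        (ssub fb (smon ((B 3)^-1 * q) 1)))))).

Definition formal_sol (L : K) (b : 'I_8 -> K) (F G : ser) : Prop :=
  (forall i, F 0%N i = 0) /\ supp_ok F /\
  (forall i, G 0%N i = 0) /\ supp_ok G /\
  qPA1 L b F G.

(* this is the (unique) solution (f^{0,+}, g^{0,+}).                   *)
Definition is_f0plus (L : K) (b : 'I_8 -> K) (F G : ser) : Prop :=
  formal_sol L b F G /\ F 1%N 1 = 1 /\ G 1%N 1 = L.

End Params.

(* Main.v *)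
Require Import Defs.
From HB Require Import structures.
From mathcomp Require Import all_boot all_order all_algebra.
From mathcomp Require Import boolp.
From mathcomp Require Import ring zify.
Set Implicit Arguments. Unset Strict Implicit. Unset Printing Implicit Defensive.
Import Order.TTheory GRing.Theory Num.Theory.
Local Open Scope ring_scope.

Section FPS.
Variable R : comNzRingType.
Definition fps := nat -> R.
HB.instance Definition _ := gen_eqMixin fps.
HB.instance Definition _ := gen_choiceMixin fps.
Definition fadd (a b : fps) : fps := fun k => a k + b k.
Definition fopp (a : fps) : fps := fun k => - a k.
Definition fzero : fps := fun _ => 0.
Definition fone : fps := fun k => if k == 0%N then 1 else 0.
Definition fmul (a b : fps) : fps := fun k => \sum_(i < k.+1) a i * b (k - i)%N.

Fact faddA : associative fadd. Proof. by move=> a b c; apply/funext=> k; rewrite /fadd addrA. Qed.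
Fact faddC : commutative fadd. Proof. by move=> a b; apply/funext=> k; rewrite /fadd addrC. Qed.
Fact fadd0 : left_id fzero fadd. Proof. by move=> a; apply/funext=> k; rewrite /fadd add0r. Qed.
Fact faddN : left_inverse fzero fopp fadd. Proof. by move=> a; apply/funext=> k; rewrite /fadd /fopp addNr. Qed.
HB.instance Definition _ := GRing.isZmodule.Build fps faddA faddC fadd0 faddN.

Lemma fmul_rev a b k : fmul a b k = \sum_(i < k.+1) a (k - i)%N * b i.
Proof. rewrite /fmul (reindex_inj rev_ord_inj) /=.
by apply: eq_bigr => j _; rewrite (sub_ordK j). Qed.

Fact fmulA : associative fmul.
Proof.
move=> p q r; apply/funext=> i; rewrite {1}/fmul fmul_rev.
pose coef3 j k := p j * (q (i - j - k)%N * r k).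
transitivity (\sum_(j < i.+1) \sum_(k < i.+1 | (k <= i - j)%N) coef3 j k).
  apply: eq_bigr => /= j _; rewrite fmul_rev big_distrr /=.
  by rewrite (big_ord_narrow_leq (leq_subr _ _)).
rewrite (exchange_big_dep predT) //=; apply: eq_bigr => k _.
transitivity (\sum_(j < i.+1 | (j <= i - k)%N) coef3 j k).
  apply: eq_bigl => j; rewrite -ltnS -(ltnS j) -!subSn ?leq_ord //.
  by rewrite -subn_gt0 -(subn_gt0 j) -!subnDA addnC.
rewrite (big_ord_narrow_leq (leq_subr _ _)) /fmul big_distrl /=.
by apply: eq_bigr => j _; rewrite /coef3 -!subnDA addnC mulrA.
Qed.

Fact fmulC : commutative fmul.
Proof. move=> a b; apply/funext=> k; rewrite fmul_rev /fmul.
by apply: eq_bigr => i _; rewrite mulrC. Qed.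

Fact fmul1 : left_id fone fmul.
Proof. move=> a; apply/funext=> k; rewrite /fmul big_ord_recl subn0 /fone /= mul1r.
by rewrite big1 ?addr0 // => i _; rewrite mul0r. Qed.

Fact fmulDl : left_distributive fmul fadd.
Proof. move=> a b c; apply/funext=> k; rewrite /fmul /fadd -big_split /=.
by apply: eq_bigr => i _; rewrite mulrDl. Qed.

Fact fone_neq0 : fone != 0.
Proof. apply/eqP => /(congr1 (fun f : fps => f 0%N)); rewrite /fone /=.
by move=> /eqP; rewrite oner_eq0. Qed.

HB.instance Definition _ := GRing.Zmodule_isComNzRing.Build fps fmulA fmulC fmul1 fmulDl fone_neq0.


Lemma fps_addE (a b : fps) k : (a + b) k = a k + b k. Proof. by []. Qed.
Lemma fps_oppE (a : fps) k : (- a) k = - a k. Proof. by []. Qed.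
Lemma fps_subE (a b : fps) k : (a - b) k = a k - b k. Proof. by []. Qed.
Lemma fps_mulE (a b : fps) k : (a * b) k = \sum_(i < k.+1) a i * b (k - i)%N. Proof. by []. Qed.
Lemma fps_mulE_rev (a b : fps) k : (a * b) k = \sum_(i < k.+1) a (k - i)%N * b i. Proof. exact: fmul_rev. Qed.
Lemma fps_oneE k : (1 : fps) k = (k == 0%N)%:R. Proof. by case: k. Qed.
Lemma fps_zeroE k : (0 : fps) k = 0. Proof. by []. Qed.
Lemma fps_sumE (I : Type) (r : seq I) (P : pred I) (F : I -> fps) k :
  (\sum_(i <- r | P i) F i) k = \sum_(i <- r | P i) F i k.
Proof. by elim/big_rec2: _ => // i y1 y2 _ <-. Qed.

Section Inv.
Variables (a : fps) (c : R).
Hypothesis ac : a 0%N * c = 1.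
Fixpoint invl (k : nat) : seq R :=
  if k is k'.+1 then
    let s := invl k' in rcons s (- c * \sum_(j < k) a (k - j)%N * nth 0 s j)
  else [:: c].
Lemma size_invl k : size (invl k) = k.+1.
Proof. by elim: k => //= k IH; rewrite size_rcons IH. Qed.
Lemma invl_nth k j : (j <= k)%N -> nth 0 (invl k) j = nth 0 (invl j) j.
Proof.
elim: k => [|k IH]; first by rewrite leqn0 => /eqP->.
rewrite leq_eqVlt => /orP[/eqP->//|]; rewrite ltnS => hj.
by rewrite /= nth_rcons size_invl ltnS hj IH.
Qed.
Definition finv : fps := fun k => nth 0 (invl k) k.
Lemma finvP : a * finv = 1.
Proof.
apply/funext=> k; rewrite fps_mulE_rev fps_oneE big_ord_recr /= subnn.
case: k => [|k].
  by rewrite big_ord0 add0r /finv /= ac.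
rewrite /finv /= nth_rcons size_invl ltnn eqxx mulrA mulrN ac mulN1r.
rewrite [X in X + _](_ : _ = \sum_(j < k.+1) a (k.+1 - j)%N * nth 0 (invl k) j).
  by rewrite addrC addNr.
by apply: eq_bigr => j _; rewrite /finv invl_nth // -ltnS.
Qed.
End Inv.
End FPS.

Lemma fps_unit (R : comNzRingType) (a : fps R) (c : R) : a 0%N * c = 1 -> exists b, a * b = 1.
Proof. by move=> h; exists (finv a c); apply: finvP. Qed.

Section PS.
Variable K : fieldType.
Local Notation PS := (fps (fps K)).

Lemma PS_mulE (X Y : PS) n w :
  (X * Y) n w = \sum_(i < n.+1) \sum_(j < w.+1) X i j * Y (n - i)%N (w - j)%N.
Proof. by rewrite fps_mulE fps_sumE; apply: eq_bigr => i _; rewrite fps_mulE. Qed.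
Lemma PS_addE (X Y : PS) n w : (X + Y) n w = X n w + Y n w. Proof. by []. Qed.
Lemma PS_subE (X Y : PS) n w : (X - Y) n w = X n w - Y n w. Proof. by []. Qed.
Lemma PS_oppE (X : PS) n w : (- X) n w = - X n w. Proof. by []. Qed.

Definition vlow (X : PS) (w n : nat) :=
  forall n' w', ((w' < w) || ((w' == w) && (n' < n)))%N -> X n' w' = 0.

Lemma termz (X Y : PS) w1 n1 w2 n2 i j n w :
  vlow X w1 n1 -> vlow Y w2 n2 -> (i <= n)%N -> (j <= w)%N ->
  ((w < w1 + w2) || ((w == w1 + w2) && ((n < n1 + n2) ||
     ((n == n1 + n2) && ~~ ((i == n1) && (j == w1))))))%N ->
  X i j * Y (n - i)%N (w - j)%N = 0.
Proof.
move=> hX hY hi hj h.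
case: (boolP ((j < w1) || ((j == w1) && (i < n1)))%N) => hl.
  by rewrite hX ?mul0r.
rewrite hY ?mulr0 //.
move: hl h hi hj; lia.
Qed.

Lemma sum_if1 (F : nat -> K) (i n : nat) :
  \sum_(j < n) (if (j == i :> nat)%N then F j else 0) = if (i < n)%N then F i else 0.
Proof. by rewrite -big_mkcond big_ord1_eq. Qed.

Lemma vlowM (X Y : PS) w1 n1 w2 n2 :
  vlow X w1 n1 -> vlow Y w2 n2 -> vlow (X * Y) (w1 + w2) (n1 + n2).
Proof.
move=> hX hY n w h; rewrite PS_mulE big1 // => i _; rewrite big1 // => j _.
apply: (termz hX hY); move: (ltn_ord i) (ltn_ord j) h; lia.
Qed.

Lemma leadM (X Y : PS) w1 n1 w2 n2 :
  vlow X w1 n1 -> vlow Y w2 n2 ->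
  (X * Y) (n1 + n2)%N (w1 + w2)%N = X n1 w1 * Y n2 w2.
Proof.
move=> hX hY; rewrite PS_mulE.
have hi : (n1 < (n1 + n2).+1)%N by lia.
have hj : (w1 < (w1 + w2).+1)%N by lia.
rewrite (bigD1 (Ordinal hi)) //= [X in _ + X]big1 ?addr0 => [|i hne].
  rewrite (bigD1 (Ordinal hj)) //= [X in _ + X]big1 ?addr0 => [|j hne].
    by rewrite !addKn.
  have hne' : (nat_of_ord j != w1) by apply: contra hne => /eqP e; apply/eqP/val_inj.
  apply: (termz hX hY); move: (ltn_ord j) hne'; lia.
have hne' : (nat_of_ord i != n1) by apply: contra hne => /eqP e; apply/eqP/val_inj.
rewrite big1 // => j _; apply: (termz hX hY); move: (ltn_ord i) (ltn_ord j) hne'; lia.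
Qed.

Definition lead (X : PS) w n c := vlow X w n /\ X n w = c.

Lemma leadMl (X Y : PS) w1 n1 w2 n2 c1 c2 :
  lead X w1 n1 c1 -> lead Y w2 n2 c2 -> lead (X * Y) (w1 + w2) (n1 + n2) (c1 * c2).
Proof. by move=> [h1 e1] [h2 e2]; split; [apply: vlowM|rewrite leadM // e1 e2]. Qed.

Lemma leadD (X Y : PS) w n c1 c2 :
  lead X w n c1 -> lead Y w n c2 -> lead (X + Y) w n (c1 + c2).
Proof. move=> [h1 e1] [h2 e2]; split; last by rewrite PS_addE e1 e2.
by move=> n' w' h; rewrite PS_addE h1 // h2 // addr0. Qed.

Lemma leadB (X Y : PS) w n c1 c2 :
  lead X w n c1 -> lead Y w n c2 -> lead (X - Y) w n (c1 - c2).
Proof. move=> [h1 e1] [h2 e2]; split; last by rewrite PS_subE e1 e2.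
by move=> n' w' h; rewrite PS_subE h1 // h2 // subr0. Qed.

Lemma leadN (X : PS) w n c : lead X w n c -> lead (- X) w n (- c).
Proof. move=> [h1 e1]; split; last by rewrite PS_oppE e1.
by move=> n' w' h; rewrite PS_oppE h1 // oppr0. Qed.

Lemma lead_up (X : PS) w n : vlow X w n.+1 -> lead X w n 0.
Proof. by move=> h; split; [move=> n' w' h'; apply: h; move: h'; lia|apply: h; rewrite eqxx ltnSn orbT]. Qed.

Lemma vlow_up (X : PS) w n : vlow X w.+1 0 -> vlow X w n.
Proof. by move=> h n' w' h'; apply: h; move: h'; lia. Qed.

Lemma vlow_le (X : PS) w n n' : vlow X w n -> (n' <= n)%N -> vlow X w n'.
Proof. by move=> h hn n1 w1 h'; apply: h; move: h' hn; lia. Qed.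

Lemma lead_eq (X : PS) w n c c' : lead X w n c -> c = c' -> lead X w n c'.
Proof. by move=> ? <-. Qed.

Definition mono (c : K) (n0 w0 : nat) : PS :=
  fun n w => if (n == n0) && (w == w0) then c else 0.

Lemma mono_mulE c n0 w0 (Y : PS) n w :
  (mono c n0 w0 * Y) n w = if (n0 <= n)%N && (w0 <= w)%N then c * Y (n - n0)%N (w - w0)%N else 0.
Proof.
rewrite PS_mulE; case: (leqP n0 n) => hn; case: (leqP w0 w) => hw /=.
- have hi : (n0 < n.+1)%N by lia.
  have hj : (w0 < w.+1)%N by lia.
  rewrite (bigD1 (Ordinal hi)) //= [X in _ + X]big1 ?addr0 => [|i hne].
    rewrite (bigD1 (Ordinal hj)) //= [X in _ + X]big1 ?addr0 => [|j hne].
      by rewrite /mono !eqxx.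
    have hne' : (nat_of_ord j != w0) by apply: contra hne => /eqP e; apply/eqP/val_inj.
    by rewrite /mono (negbTE hne') andbF mul0r.
  have hne' : (nat_of_ord i != n0) by apply: contra hne => /eqP e; apply/eqP/val_inj.
  by rewrite big1 // => j _; rewrite /mono (negbTE hne') mul0r.
- rewrite big1 // => i _; rewrite big1 // => j _; rewrite /mono.
  case: ifP => [/andP[_ /eqP e]|]; rewrite ?mul0r //; move: (ltn_ord j) hw; lia.
- rewrite big1 // => i _; rewrite big1 // => j _; rewrite /mono.
  case: ifP => [/andP[/eqP e _]|]; rewrite ?mul0r //; move: (ltn_ord i) hn; lia.
- rewrite big1 // => i _; rewrite big1 // => j _; rewrite /mono.
  case: ifP => [/andP[/eqP e _]|]; rewrite ?mul0r //; move: (ltn_ord i) hn; lia.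
Qed.

Lemma mono_mul c d n1 w1 n2 w2 :
  mono c n1 w1 * mono d n2 w2 = mono (c * d) (n1 + n2) (w1 + w2).
Proof.
apply/funext=> n; apply/funext=> w; rewrite mono_mulE /mono.
case: (leqP n1 n) => hn; case: (leqP w1 w) => hw /=.
- have E : ((n - n1 == n2) && (w - w1 == w2))%N = ((n == n1 + n2) && (w == w1 + w2))%N.
    by apply/idP/idP; lia.
  by rewrite E; case: ifP; rewrite ?mulr0.
- case: ifP => // /andP[/eqP h1 /eqP h2]; lia.
- case: ifP => // /andP[/eqP h1 /eqP h2]; lia.
- case: ifP => // /andP[/eqP h1 /eqP h2]; lia.
Qed.

Lemma mono_add c d n0 w0 : mono c n0 w0 + mono d n0 w0 = mono (c + d) n0 w0.
Proof. by apply/funext=> n; apply/funext=> w; rewrite PS_addE /mono; case: ifP; rewrite ?addr0. Qed.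
Lemma mono_opp c n0 w0 : - mono c n0 w0 = mono (- c) n0 w0.
Proof. by apply/funext=> n; apply/funext=> w; rewrite PS_oppE /mono; case: ifP; rewrite ?oppr0. Qed.
Lemma mono_one : mono 1 0 0 = 1.
Proof. apply/funext=> n; apply/funext=> w; rewrite /mono fps_oneE.
by case: n => [|n] //=; rewrite fps_oneE; case: w. Qed.

Definition cst c := mono c 0 0.
Definition Am := mono 1 1 0.
Definition Bm := mono 1 0 1.

Lemma cstM c d : cst (c * d) = cst c * cst d. Proof. by rewrite /cst mono_mul. Qed.
Lemma cstD c d : cst (c + d) = cst c + cst d. Proof. by rewrite /cst mono_add. Qed.
Lemma cstN c : cst (- c) = - cst c. Proof. by rewrite /cst mono_opp. Qed.
Lemma cst1 : cst 1 = 1. Proof. exact: mono_one. Qed.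

Lemma lead_mono c n w : lead (mono c n w) w n c.
Proof. split; last by rewrite /mono !eqxx.
by move=> n' w' h; rewrite /mono; case: ifP => // /andP[/eqP h1 /eqP h2]; move: h; lia. Qed.
Lemma vlow_mono c n w w' n' : ((w' < w) || ((w' == w) && (n' <= n)))%N -> vlow (mono c n w) w' n'.
Proof. move=> h n1 w1 h'; rewrite /mono; case: ifP => // /andP[/eqP h1 /eqP h2]; move: h h'; lia. Qed.


Definition swap (X : PS) : PS := fun n w => X w n.
Lemma swapM X Y : swap (X * Y) = swap X * swap Y.
Proof.
apply/funext=> n; apply/funext=> w; rewrite /swap !PS_mulE exchange_big /=.
by [].
Qed.
Lemma swapD X Y : swap (X + Y) = swap X + swap Y. Proof. by []. Qed.
Lemma swapB X Y : swap (X - Y) = swap X - swap Y. Proof. by []. Qed.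
Lemma swap_mono c n w : swap (mono c n w) = mono c w n.
Proof. by apply/funext=> n'; apply/funext=> w'; rewrite /swap /mono andbC. Qed.
Lemma swap1 : swap 1 = 1. Proof. by rewrite -mono_one swap_mono. Qed.
Lemma swapK X : swap (swap X) = X. Proof. by []. Qed.

Definition scl (q lam : K) (X : PS) : PS :=
  fun n w => q ^+ n * lam ^ (n%:Z - w%:Z) * X n w.
Lemma sclE q lam X n w : scl q lam X n w = q ^+ n * lam ^ (n%:Z - w%:Z) * X n w.
Proof. by []. Qed.

Lemma sclM q lam X Y : lam != 0 -> scl q lam (X * Y) = scl q lam X * scl q lam Y.
Proof.
move=> hl; apply/funext=> n; apply/funext=> w; rewrite sclE !PS_mulE big_distrr /=.
apply: eq_bigr => i _; rewrite big_distrr /=; apply: eq_bigr => j _.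
rewrite !sclE.
have hi := ltn_ord i; have hj := ltn_ord j.
have -> : (n%:Z - w%:Z) = (i%:Z - j%:Z) + ((n - i)%N%:Z - (w - j)%N%:Z) by lia.
rewrite expfzDr // -{1}(subnK (_ : (i <= n)%N)) 1?addnC ?exprD; last by rewrite -ltnS.
set a := q ^+ i; set b := q ^+ (n - i); set c := lam ^ _; set d := lam ^ _.
by rewrite -!mulrA; congr (_ * _); rewrite !mulrA; congr (_ * _); ring.
Qed.
Lemma sclD q lam X Y : scl q lam (X + Y) = scl q lam X + scl q lam Y.
Proof. by apply/funext=> n; apply/funext=> w; rewrite PS_addE !sclE mulrDr. Qed.
Lemma sclB q lam X Y : scl q lam (X - Y) = scl q lam X - scl q lam Y.
Proof. by apply/funext=> n; apply/funext=> w; rewrite PS_subE !sclE mulrBr. Qed.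
Lemma scl_mono q lam c n w : scl q lam (mono c n w) = mono (q ^+ n * lam ^ (n%:Z - w%:Z) * c) n w.
Proof. apply/funext=> n'; apply/funext=> w'; rewrite sclE /mono.
by case: ifP => [/andP[/eqP -> /eqP ->]|]; rewrite ?mulr0. Qed.
Lemma scl_cst q lam c : scl q lam (cst c) = cst c.
Proof. by rewrite /cst scl_mono expr0 subrr expr0z !mul1r. Qed.
Lemma scl1 q lam : scl q lam 1 = 1.
Proof. by rewrite -cst1 scl_cst. Qed.

Lemma lead_scl q lam X w n c :
  lead X w n c -> lead (scl q lam X) w n (q ^+ n * lam ^ (n%:Z - w%:Z) * c).
Proof. by move=> [h e]; split; [move=> n' w' h'; rewrite sclE h // mulr0|rewrite sclE e]. Qed.
Lemma vlow_scl q lam X w n : vlow X w n -> vlow (scl q lam X) w n.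
Proof. by move=> h n' w' h'; rewrite sclE h // mulr0. Qed.

Lemma swap_scl q lam lam' X : q != 0 -> lam != 0 -> lam' = (q * lam)^-1 ->
  swap (scl q lam' X) = scl q lam (swap X).
Proof.
move=> hq hl ->; apply/funext=> n; apply/funext=> w; rewrite /swap !sclE.
congr (_ * _); rewrite exprz_inv expfzMl.
rewrite -[q ^+ n]/(q ^ (n%:Z)) -[q ^+ w]/(q ^ (w%:Z)) opprB mulrA -expfzDr //.
by congr (q ^ _ * _); lia.
Qed.
End PS.
Arguments Am {K}. Arguments Bm {K}.

Section Trans.
Variable K : fieldType.
Local Notation PS := (fps (fps K)).

Definition toPS (A : ser K) : PS := fun n w => A n (n%:Z - w%:Z).

Lemma toPS_smul A B : toPS (smul A B) = toPS A * toPS B.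
Proof.
apply/funext=> k; apply/funext=> w; rewrite PS_mulE /toPS /smul.
have -> : (k%:Z < k%:Z - w%:Z) = false by lia.
have -> : (k%:Z - (k%:Z - w%:Z)) = w%:Z by lia.
apply: eq_bigr => n _; apply: eq_bigr => e _.
have hn := ltn_ord n; have he : (e <= w)%N by exact: (ltn_ord e).
congr (_ * B _ _); move: hn he; move: (nat_of_ord n) (nat_of_ord e) => n1 e1; lia.
Qed.

Lemma toPS_ssub A B : toPS (ssub A B) = toPS A - toPS B. Proof. by []. Qed.
Lemma toPS_sadd A B : toPS (sadd A B) = toPS A + toPS B. Proof. by []. Qed.

Lemma toPS_smon c k : toPS (smon c k) = mono c k k.
Proof.
apply/funext=> n; apply/funext=> w; rewrite /toPS /smon /mono.
have -> : ((n%:Z - w%:Z) == 0) = (w == n)%N by apply/idP/idP; lia.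
by case: (n =P k) => [->|] //=; rewrite ?andbF.
Qed.

Lemma toPS_sshift q lam A : toPS (sshift q lam A) = scl q lam (toPS A).
Proof. by []. Qed.

Lemma toPS_sinv A : toPS (sinv A) = swap (toPS A).
Proof.
apply/funext=> m; apply/funext=> w; rewrite /toPS /sinv /swap.
have -> : (m%:Z < m%:Z - w%:Z) = false by lia.
have -> : (m%:Z - (m%:Z - w%:Z)) = w%:Z by lia.
by congr (A _ _); lia.
Qed.

Lemma toPS_inj A B : supp_ok A -> supp_ok B -> toPS A = toPS B -> A = B.
Proof.
move=> hA hB e; apply/funext=> n; apply/funext=> i.
case: (ltrP n%:Z i) => h; first by rewrite hA // hB.
have := congr1 (fun X : PS => X n (absz (n%:Z - i))) e; rewrite /toPS.
by have -> : n%:Z - (absz (n%:Z - i))%:Z = i by lia.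
Qed.

Lemma supp_smul (A B : ser K) : supp_ok (smul A B).
Proof. by move=> n i h; rewrite /smul h. Qed.

Lemma supp_smon (c : K) k : supp_ok (smon c k).
Proof. move=> n i h; rewrite /smon; case: ifP => // /andP[_ /eqP e]; move: h; rewrite e; lia. Qed.

End Trans.

Lemma sym1 (R : comNzRingType) (A B T f g sf ft gt sft u v u' v' su sv q r li lam
   b1 b2 b3 b4 b5 b6 b7 b8 ib1 ib2 ib3 ib4 ib5 ib6 ib7 ib8 : R) :
  T = A * B -> f = A * v -> g = A * v' -> sf = r * A * sv -> ft = B * u -> gt = B * u' ->
  sft = li * B * su ->
  u * v = 1 -> u' * v' = 1 -> su * sv = 1 -> q = r * li -> r = lam * q -> lam * li = 1 ->
  b1 * ib1 = 1 -> b2 * ib2 = 1 -> b3 * ib3 = 1 -> b4 * ib4 = 1 ->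
  b5 * ib5 = 1 -> b6 * ib6 = 1 -> b7 * ib7 = 1 -> b8 * ib8 = 1 ->
  B ^+ 4 * ((g * f - T ^+ 2) * ((g * sf - q * T ^+ 2) * ((g - b5) * ((g - b6) * ((g - b7) * (g - b8)))))
   - (g * f - 1) * ((g * sf - 1) * ((g - b1 * T) * ((g - b2 * T) * ((g - b3 * T) * (g - b4 * T)))))) =
  A ^+ 4 * v * v' ^+ 6 * sv * ((r * b5 * b6 * b7 * b8) *
     ((gt * ft - 1) * ((gt * sft - 1) * ((gt - ib5 * T) * ((gt - ib6 * T) * ((gt - ib7 * T) * (gt - ib8 * T))))))
   - (lam * b1 * b2 * b3 * b4) *
     ((gt * ft - T ^+ 2) * ((gt * sft - q * T ^+ 2) * ((gt - ib1) * ((gt - ib2) * ((gt - ib3) * (gt - ib4))))))).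
Proof.
move=> hT hf hg hsf hft hgt hsft huv hu hsu hq hr hl h1 h2 h3 h4 h5 h6 h7 h8.
have L1 : g * f - T ^+ 2 = A ^+ 2 * v * v' * (1 - gt * ft).
  rewrite [RHS](_ : _ = A ^+ 2 * v * v' - A ^+ 2 * B ^+ 2 * (u * v) * (u' * v')); last by rewrite hgt hft; ring.
  by rewrite huv hu hf hg hT; ring.
have L2 : g * sf - q * T ^+ 2 = r * A ^+ 2 * v' * sv * (1 - gt * sft).
  rewrite [RHS](_ : _ = r * A ^+ 2 * v' * sv - r * li * A ^+ 2 * B ^+ 2 * (u' * v') * (su * sv)); last by rewrite hgt hsft; ring.
  by rewrite hu hsu hg hsf hT hq; ring.
have L3 b ib : b * ib = 1 -> B * (g - b) = - b * v' * (gt - ib * T).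
  move=> hb; rewrite [RHS](_ : _ = - b * B * (u' * v') + (b * ib) * v' * A * B); last by rewrite hgt hT; ring.
  by rewrite hb hu hg; ring.
have R1 : B ^+ 2 * (g * f - 1) = - v * v' * (gt * ft - T ^+ 2).
  rewrite [RHS](_ : _ = - B ^+ 2 * (u * v) * (u' * v') + v * v' * A ^+ 2 * B ^+ 2); last by rewrite hgt hft hT; ring.
  by rewrite huv hu hf hg; ring.
have R2 : B ^+ 2 * (g * sf - 1) = - lam * v' * sv * (gt * sft - q * T ^+ 2).
  rewrite [RHS](_ : _ = - (lam * li) * B ^+ 2 * (u' * v') * (su * sv) + (lam * q) * v' * sv * A ^+ 2 * B ^+ 2); last by rewrite hgt hsft hT; ring.
  by rewrite hl hu hsu -hr hg hsf; ring.
have R3 b ib : b * ib = 1 -> g - b * T = - b * A * v' * (gt - ib).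
  move=> hb; rewrite [RHS](_ : _ = - b * A * B * (u' * v') + (b * ib) * A * v'); last by rewrite hgt; ring.
  by rewrite hb hu hg hT; ring.
have eL : B ^+ 4 * ((g * f - T ^+ 2) * ((g * sf - q * T ^+ 2) * ((g - b5) * ((g - b6) * ((g - b7) * (g - b8)))))) =
   (g * f - T ^+ 2) * (g * sf - q * T ^+ 2) * (B * (g - b5)) * (B * (g - b6)) * (B * (g - b7)) * (B * (g - b8)) by ring.
have eR : B ^+ 4 * ((g * f - 1) * ((g * sf - 1) * ((g - b1 * T) * ((g - b2 * T) * ((g - b3 * T) * (g - b4 * T)))))) =
   (B ^+ 2 * (g * f - 1)) * (B ^+ 2 * (g * sf - 1)) * (g - b1 * T) * (g - b2 * T) * (g - b3 * T) * (g - b4 * T) by ring.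
rewrite mulrBr eL eR L1 L2 (L3 _ _ h5) (L3 _ _ h6) (L3 _ _ h7) (L3 _ _ h8) R1 R2 (R3 _ _ h1) (R3 _ _ h2) (R3 _ _ h3) (R3 _ _ h4).
ring.
Qed.

Lemma sym2 (R : comNzRingType) (A B T g sf sg gt sft sgt v' sv sv' su su' q r li lam
   b1 b2 b3 b4 b5 b6 b7 b8 ib1 ib2 ib3 ib4 ib5 ib6 ib7 ib8 u' : R) :
  T = A * B -> g = A * v' -> sf = r * A * sv -> sg = r * A * sv' -> gt = B * u' ->
  sft = li * B * su -> sgt = li * B * su' ->
  u' * v' = 1 -> su * sv = 1 -> su' * sv' = 1 -> q = r * li -> r = lam * q -> lam * li = 1 ->
  b1 * ib1 = 1 -> b2 * ib2 = 1 -> b3 * ib3 = 1 -> b4 * ib4 = 1 ->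
  b5 * ib5 = 1 -> b6 * ib6 = 1 -> b7 * ib7 = 1 -> b8 * ib8 = 1 ->
  B ^+ 4 * ((g * sf - q * T ^+ 2) * ((sg * sf - q ^+ 2 * T ^+ 2) * ((sf - ib5) * ((sf - ib6) * ((sf - ib7) * (sf - ib8)))))
   - (g * sf - 1) * ((sg * sf - 1) * ((sf - ib1 * q * T) * ((sf - ib2 * q * T) * ((sf - ib3 * q * T) * (sf - ib4 * q * T)))))) =
  A ^+ 4 * v' * sv' * sv ^+ 6 * ((r ^+ 3 * lam ^+ 4 * ib5 * ib6 * ib7 * ib8) *
     ((gt * sft - 1) * ((sgt * sft - 1) * ((sft - b5 * q * T) * ((sft - b6 * q * T) * ((sft - b7 * q * T) * (sft - b8 * q * T))))))
   - (lam ^+ 3 * r ^+ 4 * ib1 * ib2 * ib3 * ib4) *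
     ((gt * sft - q * T ^+ 2) * ((sgt * sft - q ^+ 2 * T ^+ 2) * ((sft - b1) * ((sft - b2) * ((sft - b3) * (sft - b4))))))).
Proof.
move=> hT hg hsf hsg hgt hsft hsgt hu hsu hsu' hq hr hl h1 h2 h3 h4 h5 h6 h7 h8.
have L1 : g * sf - q * T ^+ 2 = r * A ^+ 2 * v' * sv * (1 - gt * sft).
  rewrite [RHS](_ : _ = r * A ^+ 2 * v' * sv - r * li * A ^+ 2 * B ^+ 2 * (u' * v') * (su * sv)); last by rewrite hgt hsft; ring.
  by rewrite hu hsu hg hsf hT hq; ring.
have L2 : sg * sf - q ^+ 2 * T ^+ 2 = r ^+ 2 * A ^+ 2 * sv' * sv * (1 - sgt * sft).
  rewrite [RHS](_ : _ = r ^+ 2 * A ^+ 2 * sv' * sv - (r * li) ^+ 2 * A ^+ 2 * B ^+ 2 * (su' * sv') * (su * sv)); last by rewrite hsgt hsft; ring.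
  by rewrite hsu' hsu hsg hsf hT hq; ring.
have L3 b ib : b * ib = 1 -> B * (sf - ib) = - lam * ib * sv * (sft - b * q * T).
  move=> hb; rewrite [RHS](_ : _ = - (lam * li) * ib * B * (su * sv) + (lam * q) * (b * ib) * sv * A * B); last by rewrite hsft hT; ring.
  by rewrite hb hl hsu -hr hsf; ring.
have R1 : B ^+ 2 * (g * sf - 1) = - lam * v' * sv * (gt * sft - q * T ^+ 2).
  rewrite [RHS](_ : _ = - (lam * li) * B ^+ 2 * (u' * v') * (su * sv) + (lam * q) * v' * sv * A ^+ 2 * B ^+ 2); last by rewrite hgt hsft hT; ring.
  by rewrite hl hu hsu -hr hg hsf; ring.
have R2 : B ^+ 2 * (sg * sf - 1) = - lam ^+ 2 * sv' * sv * (sgt * sft - q ^+ 2 * T ^+ 2).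
  rewrite [RHS](_ : _ = - (lam * li) ^+ 2 * B ^+ 2 * (su' * sv') * (su * sv) + (lam * q) ^+ 2 * sv' * sv * A ^+ 2 * B ^+ 2); last by rewrite hsgt hsft hT; ring.
  by rewrite hl hsu' hsu -hr hsg hsf; ring.
have R3 b ib : b * ib = 1 -> sf - ib * q * T = - r * ib * A * sv * (sft - b).
  move=> hb; rewrite [RHS](_ : _ = - (r * li) * ib * A * B * (su * sv) + r * (b * ib) * A * sv); last by rewrite hsft; ring.
  by rewrite hb hsu -hq hsf hT; ring.
have eL : B ^+ 4 * ((g * sf - q * T ^+ 2) * ((sg * sf - q ^+ 2 * T ^+ 2) * ((sf - ib5) * ((sf - ib6) * ((sf - ib7) * (sf - ib8)))))) =
   (g * sf - q * T ^+ 2) * (sg * sf - q ^+ 2 * T ^+ 2) * (B * (sf - ib5)) * (B * (sf - ib6)) * (B * (sf - ib7)) * (B * (sf - ib8)) by ring.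
have eR : B ^+ 4 * ((g * sf - 1) * ((sg * sf - 1) * ((sf - ib1 * q * T) * ((sf - ib2 * q * T) * ((sf - ib3 * q * T) * (sf - ib4 * q * T)))))) =
   (B ^+ 2 * (g * sf - 1)) * (B ^+ 2 * (sg * sf - 1)) * (sf - ib1 * q * T) * (sf - ib2 * q * T) * (sf - ib3 * q * T) * (sf - ib4 * q * T) by ring.
have h5' : ib5 * b5 = 1 by rewrite mulrC. have h6' : ib6 * b6 = 1 by rewrite mulrC.
have h7' : ib7 * b7 = 1 by rewrite mulrC. have h8' : ib8 * b8 = 1 by rewrite mulrC.
rewrite mulrBr eL eR L1 L2 (L3 _ _ h5) (L3 _ _ h6) (L3 _ _ h7) (L3 _ _ h8) R1 R2 (R3 _ _ h1) (R3 _ _ h2) (R3 _ _ h3) (R3 _ _ h4).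
ring.
Qed.

Lemma tele1 (R : comNzRingType) (f g sf f2 g2 sf2 d e sd T2 qT2 c5 c6 c7 c8 one x1 x2 x3 x4 : R) :
  f = f2 + d -> g = g2 + e -> sf = sf2 + sd ->
  (((g * f - T2) * ((g * sf - qT2) * ((g - c5) * ((g - c6) * ((g - c7) * (g - c8)))))) - ((g * f - one) * ((g * sf - one) * ((g - x1) * ((g - x2) * ((g - x3) * (g - x4))))))) - (((g2 * f2 - T2) * ((g2 * sf2 - qT2) * ((g2 - c5) * ((g2 - c6) * ((g2 - c7) * (g2 - c8)))))) - ((g2 * f2 - one) * ((g2 * sf2 - one) * ((g2 - x1) * ((g2 - x2) * ((g2 - x3) * (g2 - x4))))))) =
  d * ((g * ((g2 * sf2 - qT2) * ((g2 - c5) * ((g2 - c6) * ((g2 - c7) * (g2 - c8)))))) - (g * ((g2 * sf2 - one) * ((g2 - x1) * ((g2 - x2) * ((g2 - x3) * (g2 - x4))))))) + sd * (((g * f - T2) * (g * ((g2 - c5) * ((g2 - c6) * ((g2 - c7) * (g2 - c8)))))) - ((g * f - one) * (g * ((g2 - x1) * ((g2 - x2) * ((g2 - x3) * (g2 - x4))))))) + e * (((f2 * ((g2 * sf2 - qT2) * ((g2 - c5) * ((g2 - c6) * ((g2 - c7) * (g2 - c8)))))) + ((g * f - T2) * (sf2 * ((g2 - c5) * ((g2 - c6) * ((g2 - c7) * (g2 - c8)))))) + ((g * f - T2) * ((g * sf - qT2) * ((g2 - c6) * ((g2 - c7) * (g2 - c8))))) + ((g * f - T2) * ((g * sf - qT2)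 * ((g - c5) * ((g2 - c7) * (g2 - c8))))) + ((g * f - T2) * ((g * sf - qT2) * ((g - c5) * ((g - c6) * (g2 - c8))))) + ((g * f - T2) * ((g * sf - qT2) * ((g - c5) * ((g - c6) * (g - c7)))))) - ((f2 * ((g2 * sf2 - one) * ((g2 - x1) * ((g2 - x2) * ((g2 - x3) * (g2 - x4)))))) + ((g * f - one) * (sf2 * ((g2 - x1) * ((g2 - x2) * ((g2 - x3) * (g2 - x4)))))) + ((g * f - one) * ((g * sf - one) * ((g2 - x2) * ((g2 - x3) * (g2 - x4))))) + ((g * f - one) * ((g * sf - one) * ((g - x1) * ((g2 - x3) * (g2 - x4))))) + ((g * f - one) * ((g * sf - one) * ((g - x1) * ((g - x2) * (g2 - x4))))) + ((g * f - one) * ((g * sf - one) * ((g - x1) * ((g - x2) * (g - x3))))))).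
Proof. by move=> -> -> ->; ring. Qed.

Lemma tele2 (R : comNzRingType) (g sf sg g2 sf2 sg2 e sd se qT2 q2T2 k5 k6 k7 k8 one z1 z2 z3 z4 : R) :
  g = g2 + e -> sf = sf2 + sd -> sg = sg2 + se ->
  (((g * sf - qT2) * ((sg * sf - q2T2) * ((sf - k5) * ((sf - k6) * ((sf - k7) * (sf - k8)))))) - ((g * sf - one) * ((sg * sf - one) * ((sf - z1) * ((sf - z2) * ((sf - z3) * (sf - z4))))))) - (((g2 * sf2 - qT2) * ((sg2 * sf2 - q2T2) * ((sf2 - k5) * ((sf2 - k6) * ((sf2 - k7) * (sf2 - k8)))))) - ((g2 * sf2 - one) * ((sg2 * sf2 - one) * ((sf2 - z1) * ((sf2 - z2) * ((sf2 - z3) * (sf2 - z4))))))) =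
  sd * (((g * ((sg2 * sf2 - q2T2) * ((sf2 - k5) * ((sf2 - k6) * ((sf2 - k7) * (sf2 - k8)))))) + ((g * sf - qT2) * (sg * ((sf2 - k5) * ((sf2 - k6) * ((sf2 - k7) * (sf2 - k8)))))) + ((g * sf - qT2) * ((sg * sf - q2T2) * ((sf2 - k6) * ((sf2 - k7) * (sf2 - k8))))) + ((g * sf - qT2) * ((sg * sf - q2T2) * ((sf - k5) * ((sf2 - k7) * (sf2 - k8))))) + ((g * sf - qT2) * ((sg * sf - q2T2) * ((sf - k5) * ((sf - k6) * (sf2 - k8))))) + ((g * sf - qT2) * ((sg * sf - q2T2) * ((sf - k5) * ((sf - k6) * (sf - k7)))))) - ((g * ((sg2 * sf2 - one) * ((sf2 - z1) * ((sf2 - z2) * ((sf2 - z3) * (sf2 - z4)))))) + ((g * sf - one) * (sg * ((sf2 - z1) * ((sf2 - z2) * ((sf2 - z3) * (sf2 - z4)))))) + ((g * sf - one) * ((sg * sf - one) * ((sf2 - z2) * ((sf2 - z3) * (sf2 - z4))))) + ((g * sf - one) * ((sg * sf - one) * ((sf - z1) * ((sf2 - z3) * (sf2 - z4))))) + ((g * sf - one) * ((sg * sf - one) * ((sf - z1) * ((sf - z2) * (sf2 - z4))))) + ((g * sf - one) * ((sg * sf - one) * ((sf - z1) * ((sf - z2) * (sf - z3))))))) + e * ((sf2 * ((sg2 * sf2 - q2T2) * ((sf2 - k5) * ((sf2 - k6) * ((sf2 - k7) * (sf2 - k8)))))) - (sf2 * ((sg2 * sf2 - one) * ((sf2 - z1)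 * ((sf2 - z2) * ((sf2 - z3) * (sf2 - z4))))))) + se * (((g * sf - qT2) * (sf2 * ((sf2 - k5) * ((sf2 - k6) * ((sf2 - k7) * (sf2 - k8)))))) - ((g * sf - one) * (sf2 * ((sf2 - z1) * ((sf2 - z2) * ((sf2 - z3) * (sf2 - z4))))))).
Proof. by move=> -> -> ->; ring. Qed.

Section U.
Variable K : fieldType.
Local Notation PS := (fps (fps K)).

Definition PSeq1 (q : K) (B : nat -> K) (f g sf : PS) :=
  (g * f - mono 1 2 2) * ((g * sf - mono q 2 2) * ((g - mono (B 4%N) 0 0) * ((g - mono (B 5%N) 0 0) *
    ((g - mono (B 6%N) 0 0) * (g - mono (B 7%N) 0 0))))) =
  (g * f - mono 1 0 0) * ((g * sf - mono 1 0 0) * ((g - mono (B 0%N) 1 1) * ((g - mono (B 1%N) 1 1) *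
    ((g - mono (B 2%N) 1 1) * (g - mono (B 3%N) 1 1))))).
Definition PSeq2 (q : K) (B : nat -> K) (g sf sg : PS) :=
  (g * sf - mono q 2 2) * ((sg * sf - mono (q ^+ 2) 2 2) * ((sf - mono (B 4%N)^-1 0 0) * ((sf - mono (B 5%N)^-1 0 0) *
    ((sf - mono (B 6%N)^-1 0 0) * (sf - mono (B 7%N)^-1 0 0))))) =
  (g * sf - mono 1 0 0) * ((sg * sf - mono 1 0 0) * ((sf - mono ((B 0%N)^-1 * q) 1 1) * ((sf - mono ((B 1%N)^-1 * q) 1 1) *
    ((sf - mono ((B 2%N)^-1 * q) 1 1) * (sf - mono ((B 3%N)^-1 * q) 1 1))))).

Definition lead0 (X : PS) n c := lead X 0 n c.
Lemma lead0M X Y n1 n2 n c1 c2 : lead0 X n1 c1 -> lead0 Y n2 c2 -> (n1 + n2)%N = n -> lead0 (X * Y) n (c1 * c2).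
Proof. by move=> h1 h2 <-; apply: (leadMl h1 h2). Qed.
Lemma lead0_lo X n1 c1 m : lead0 X n1 c1 -> (m < n1)%N -> lead0 X m 0.
Proof. by move=> [h _] hm; apply: lead_up; apply: vlow_le h _. Qed.
Lemma lead0B_lt X Y n1 n2 c1 c2 : lead0 X n1 c1 -> lead0 Y n2 c2 -> (n1 < n2)%N -> lead0 (X - Y) n1 c1.
Proof. by move=> h1 h2 h; rewrite -[c1]subr0; apply: leadB h1 (lead0_lo h2 h). Qed.
Lemma lead0B_gt X Y n1 n2 c1 c2 : lead0 X n1 c1 -> lead0 Y n2 c2 -> (n2 < n1)%N -> lead0 (X - Y) n2 (- c2).
Proof. by move=> h1 h2 h; rewrite -[- c2]add0r; apply: leadB (lead0_lo h1 h) h2. Qed.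
Lemma lead0B_eq X Y n c1 c2 : lead0 X n c1 -> lead0 Y n c2 -> lead0 (X - Y) n (c1 - c2).
Proof. exact: leadB. Qed.
Lemma lead0D_lt X Y n1 n2 c1 c2 : lead0 X n1 c1 -> lead0 Y n2 c2 -> (n1 < n2)%N -> lead0 (X + Y) n1 c1.
Proof. by move=> h1 h2 h; rewrite -[c1]addr0; apply: leadD h1 (lead0_lo h2 h). Qed.
Lemma lead0D_gt X Y n1 n2 c1 c2 : lead0 X n1 c1 -> lead0 Y n2 c2 -> (n2 < n1)%N -> lead0 (X + Y) n2 c2.
Proof. by move=> h1 h2 h; rewrite -[c2]add0r; apply: leadD (lead0_lo h1 h) h2. Qed.
Lemma lead0D_eq X Y n c1 c2 : lead0 X n c1 -> lead0 Y n c2 -> lead0 (X + Y) n (c1 + c2).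
Proof. exact: leadD. Qed.
Lemma lead0_cst c : lead0 (mono c 0 0) 0 c. Proof. exact: lead_mono. Qed.
Lemma lead0_monoT c k : (0 < k)%N -> lead0 (mono c k k) 10 0.
Proof. by move=> hk; apply: lead_up; apply: vlow_mono; rewrite hk. Qed.

End U.

Ltac getlead X H :=
  lazymatch X with
  | ?Y * ?Z =>
      let H1 := fresh "H" in let H2 := fresh "H" in getlead Y H1; getlead Z H2;
      lazymatch type of H1 with lead0 _ ?n1 _ => lazymatch type of H2 with lead0 _ ?n2 _ =>
        let n := eval vm_compute in (n1 + n2)%N in
        pose proof (lead0M H1 H2 (erefl n)) as H; clear H1 H2 end end
  | ?Y - ?Z =>
      let H1 := fresh "H" in let H2 := fresh "H" in getlead Y H1; getlead Z H2;
      lazymatch type of H1 with lead0 _ ?n1 _ => lazymatch type of H2 with lead0 _ ?n2 _ =>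
        let b1 := eval vm_compute in (n1 < n2)%N in
        let b2 := eval vm_compute in (n2 < n1)%N in
        lazymatch b1 with
        | true => pose proof (lead0B_lt H1 H2 (erefl true)) as H
        | false => lazymatch b2 with
          | true => pose proof (lead0B_gt H1 H2 (erefl true)) as H
          | false => pose proof (lead0B_eq H1 H2) as H end end; clear H1 H2 end end
  | ?Y + ?Z =>
      let H1 := fresh "H" in let H2 := fresh "H" in getlead Y H1; getlead Z H2;
      lazymatch type of H1 with lead0 _ ?n1 _ => lazymatch type of H2 with lead0 _ ?n2 _ =>
        let b1 := eval vm_compute in (n1 < n2)%N in
        let b2 := eval vm_compute in (n2 < n1)%N in
        lazymatch b1 with
        | true => pose proof (lead0D_lt H1 H2 (erefl true)) as H
        | false => lazymatch b2 with
          | true => pose proof (lead0D_gt H1 H2 (erefl true)) as H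
          | false => pose proof (lead0D_eq H1 H2) as H end end; clear H1 H2 end end
  | mono ?c 0 0 => pose proof (lead0_cst c) as H
  | mono ?c ?k ?k => pose proof (@lead0_monoT _ c k (erefl true)) as H
  | _ => lazymatch goal with H0 : lead0 X _ _ |- _ => pose proof H0 as H end
  end.


Section Uniq.
Variable K : fieldType.
Local Notation PS := (fps (fps K)).

Lemma solve2 (x y a11 a12 a21 a22 : K) : a11 * a22 - a12 * a21 != 0 ->
  a11 * x + a12 * y = 0 -> a21 * x + a22 * y = 0 -> x = 0 /\ y = 0.
Proof.
move=> hd e1 e2; split.
  have h : (a11 * a22 - a12 * a21) * x = a22 * (a11 * x + a12 * y) - a12 * (a21 * x + a22 * y) by ring.
  by rewrite e1 e2 !mulr0 subr0 in h; move/eqP: h; rewrite mulf_eq0 (negbTE hd) => /eqP.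
have h : (a11 * a22 - a12 * a21) * y = a11 * (a21 * x + a22 * y) - a21 * (a11 * x + a12 * y) by ring.
by rewrite e1 e2 !mulr0 subr0 in h; move/eqP: h; rewrite mulf_eq0 (negbTE hd) => /eqP.
Qed.

Lemma coefDY (d Y : PS) w n m c : vlow d w n -> lead0 Y m c -> (d * Y) (n + m)%N w = d n w * c.
Proof. by move=> hd [hY <-]; rewrite -[in LHS](addn0 w) leadM. Qed.

Lemma lead_atom (f : PS) c : (forall w, f 0%N w = 0) -> f 1%N 0%N = c -> lead0 f 1 c.
Proof. move=> h0 h1; split => // n' w' h.
have [-> ->] : n' = 0%N /\ w' = 0%N by move: h; lia.
exact: h0. Qed.

Variables (L : K) (b : 'I_8 -> K).
Local Notation q := (qpar b).
Local Notation lam := (lampar L b).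
Local Notation B := (fun k : nat => b (inord k)).

Lemma uniq_sol (f g f2 g2 : PS) :
  L != 0 -> (forall i, b i != 0) ->
  (forall n w, (0 < n)%N -> ~~ ((n == 1%N) && (w == 0%N)) -> q ^+ n * lam ^ (n%:Z - w%:Z) != q * lam) ->
  PSeq1 q B f g (scl q lam f) -> PSeq2 q B g (scl q lam f) (scl q lam g) ->
  PSeq1 q B f2 g2 (scl q lam f2) -> PSeq2 q B g2 (scl q lam f2) (scl q lam g2) ->
  (forall w, f 0%N w = 0) -> (forall w, g 0%N w = 0) -> (forall w, f2 0%N w = 0) -> (forall w, g2 0%N w = 0) ->
  f 1%N 0%N = 1 -> g 1%N 0%N = L -> f2 1%N 0%N = 1 -> g2 1%N 0%N = L ->
  f = f2 /\ g = g2.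
Proof.
move=> hL hb hchi e1 e2 e1' e2' f0 g0 f20 g20 f1 g1 f21 g21.
have hlam : lam != 0 by rewrite /lampar mulf_neq0 ?invr_eq0 ?mulf_neq0 ?expf_neq0.
suff H : forall w n, f n w = f2 n w /\ g n w = g2 n w.
  by split; apply/funext=> n; apply/funext=> w; case: (H w n).
elim/ltn_ind => w IHw; elim/ltn_ind => n IHn.
case: n IHn => [|n] IHn; first by rewrite f0 g0 f20 g20.
case: (boolP ((n == 0%N) && (w == 0%N))) => [/andP[/eqP-> /eqP->]|hnw].
  by rewrite f1 g1 f21 g21.
pose d := f - f2; pose e := g - g2.
have hv : forall n' w', ((w' < w) || ((w' == w) && (n' < n.+1)))%N -> d n' w' = 0 /\ e n' w' = 0.
  move=> n' w' /orP[h|/andP[/eqP-> h]].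
    by case: (IHw w' h n') => h1 h2; rewrite /d /e !PS_subE h1 h2 !subrr.
  by case: (IHn n' h) => h1 h2; rewrite /d /e !PS_subE h1 h2 !subrr.
have hd : vlow d w n.+1 by move=> n' w' h; case: (hv n' w' h).
have he : vlow e w n.+1 by move=> n' w' h; case: (hv n' w' h).
have lf := lead_atom f0 f1. have lg := lead_atom g0 g1.
have lf2 := lead_atom f20 f21. have lg2 := lead_atom g20 g21.
have sc1 c : q ^+ 1 * lam ^ (1%:Z - 0%:Z) * c = q * lam * c by rewrite expr1 subr0 expr1z.
have lsf : lead0 (scl q lam f) 1 (q * lam * 1) by rewrite -sc1; exact: lead_scl.
have lsg : lead0 (scl q lam g) 1 (q * lam * L) by rewrite -sc1; exact: lead_scl.
have lsf2 : lead0 (scl q lam f2) 1 (q * lam * 1) by rewrite -sc1; exact: lead_scl.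
have lsg2 : lead0 (scl q lam g2) 1 (q * lam * L) by rewrite -sc1; exact: lead_scl.
have T1 := @tele1 _ f g (scl q lam f) f2 g2 (scl q lam f2) d e (scl q lam d)
   (mono 1 2 2) (mono q 2 2) (mono (B 4%N) 0 0) (mono (B 5%N) 0 0) (mono (B 6%N) 0 0) (mono (B 7%N) 0 0)
   (mono 1 0 0) (mono (B 0%N) 1 1) (mono (B 1%N) 1 1) (mono (B 2%N) 1 1) (mono (B 3%N) 1 1).
rewrite e1 e1' !subrr ?subr0 in T1.
have T2 := @tele2 _ g (scl q lam f) (scl q lam g) g2 (scl q lam f2) (scl q lam g2) e (scl q lam d) (scl q lam e)
   (mono q 2 2) (mono (q ^+ 2) 2 2) (mono (B 4%N)^-1 0 0) (mono (B 5%N)^-1 0 0) (mono (B 6%N)^-1 0 0) (mono (B 7%N)^-1 0 0)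
   (mono 1 0 0) (mono ((B 0%N)^-1 * q) 1 1) (mono ((B 1%N)^-1 * q) 1 1) (mono ((B 2%N)^-1 * q) 1 1) (mono ((B 3%N)^-1 * q) 1 1).
rewrite e2 e2' !subrr ?subr0 in T2.
have ef : f = f2 + d by rewrite /d addrC subrK.
have eg : g = g2 + e by rewrite /e addrC subrK.
have esf : scl q lam f = scl q lam f2 + scl q lam d by rewrite /d sclB addrC subrK.
have esg : scl q lam g = scl q lam g2 + scl q lam e by rewrite /e sclB addrC subrK.
move: {T1}(T1 ef eg esf) {T2}(T2 eg esf esg) => T1 T2.
lazymatch type of T1 with _ = _ * ?Y1 + _ * ?Y3 + _ * ?Y2 =>
  getlead Y1 hY1; getlead Y3 hY3; getlead Y2 hY2 end.
lazymatch type of T2 with _ = _ * ?Y1 + _ * ?Y3 + _ * ?Y2 =>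
  getlead Y1 hZ1; getlead Y3 hZ2; getlead Y2 hZ3 end.
have C1 := congr1 (fun X : PS => X (n.+1 + 3)%N w) T1.
have C2 := congr1 (fun X : PS => X (n.+1 + 3)%N w) T2.
rewrite /= !PS_addE (coefDY hd hY1) (coefDY (vlow_scl q lam hd) hY3) (coefDY he hY2) sclE in C1.
rewrite /= !PS_addE (coefDY (vlow_scl q lam hd) hZ1) (coefDY he hZ2) (coefDY (vlow_scl q lam he) hZ3) !sclE in C2.
clear hY1 hY2 hY3 hZ1 hZ2 hZ3 T1 T2.
have hchi' := hchi n.+1 w erefl hnw.
move: hchi' C1 C2; set chi := q ^+ n.+1 * lam ^ _ => hchi' C1 C2.
have hq : q != 0.
  by rewrite /qpar mulf_neq0 ?invr_eq0 ?mulf_neq0.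
have hr : q * lam != 0 by rewrite mulf_neq0.
have [hx hy] : d n.+1 w = 0 /\ e n.+1 w = 0.
  lazymatch type of C1 with _ = ?x * ?c1 + ?chi * ?x * ?c3 + ?y * ?c2 =>
  lazymatch type of C2 with _ = ?chi * ?x * ?z1 + ?y * ?z2 + ?chi * ?y * ?z3 =>
    apply: (@solve2 x y (c1 + chi * c3) c2 (chi * z1) (z2 + chi * z3));
    [ | by transitivity (x * c1 + chi * x * c3 + y * c2); [ring | rewrite -C1]
      | by transitivity (chi * x * z1 + y * z2 + chi * y * z3); [ring | rewrite -C2]] end end.
  suff E : forall z : K, z = L ^+ 3 * (q * lam) ^+ 2 * (q * lam - chi) ^+ 2 -> z != 0.
    apply: E.
  2: by move=> z ->; apply: mulf_neq0; [apply: mulf_neq0|]; apply: expf_neq0 => //; rewrite subr_eq0 eq_sym.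
  clearbody chi; rewrite /qpar /lampar.
  have h0 := hb (inord 0); have h1 := hb (inord 1); have h2 := hb (inord 2); have h3 := hb (inord 3).
  have h4 := hb (inord 4); have h5 := hb (inord 5); have h6 := hb (inord 6); have h7 := hb (inord 7).
  by field; rewrite h0 h1 h2 h3 h4 h5 h6 h7.
by split; apply/eqP; rewrite -subr_eq0; apply/eqP; [exact: hx | exact: hy].
Qed.
End Uniq.

Section Main.
Variable K : fieldType.
Local Notation PS := (fps (fps K)).

Lemma monoT (c : K) k : mono c k k = cst c * (Am * Bm) ^+ k.
Proof.
elim: k => [|k IH]; first by rewrite expr0 mulr1.
rewrite exprS mulrCA -IH /Am /Bm !mono_mul !mul1r.
by congr mono; lia.
Qed.
Lemma monoA (c : K) : mono c 1 0 = cst c * Am.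
Proof. by rewrite /cst /Am mono_mul mulr1. Qed.
Lemma monoB (c : K) : mono c 0 1 = cst c * Bm.
Proof. by rewrite /cst /Bm mono_mul mulr1. Qed.
Lemma cst_exp (c : K) n : cst (c ^+ n) = cst c ^+ n.
Proof. by elim: n => [|n IH]; rewrite ?expr0 ?cst1 // !exprS cstM IH. Qed.

Lemma Bm_cancel (X : PS) : Bm * X = 0 -> X = 0.
Proof.
move=> h; apply/funext=> n; apply/funext=> w.
have := congr1 (fun Y : PS => Y n w.+1) h; rewrite /Bm mono_mulE /=.
by rewrite subn0 subn1 /= mul1r.
Qed.
Lemma Bm4_cancel (X : PS) : Bm ^+ 4 * X = 0 -> X = 0.
Proof. by rewrite !exprS expr0 mulr1 -!mulrA => /Bm_cancel/Bm_cancel/Bm_cancel/Bm_cancel. Qed.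

Variables (L : K) (b : 'I_8 -> K).
Hypothesis hL : L != 0.
Hypothesis hb : forall i, b i != 0.
Local Notation q := (qpar b).
Local Notation lam := (lampar L b).
Local Notation B := (fun k : nat => b (inord k)).
Local Notation B' := (fun k : nat => bdual b (inord k)).

Lemma bd k : (k < 8)%N -> bdual b (inord k) = (b (inord ((k + 4) %% 8)))^-1.
Proof. by move=> hk; rewrite /bdual inordK. Qed.

Lemma bd0 : bdual b (inord 0) = (b (inord 4))^-1. Proof. by rewrite /bdual inordK. Qed.
Lemma bd1 : bdual b (inord 1) = (b (inord 5))^-1. Proof. by rewrite /bdual inordK. Qed.
Lemma bd2 : bdual b (inord 2) = (b (inord 6))^-1. Proof. by rewrite /bdual inordK. Qed.
Lemma bd3 : bdual b (inord 3) = (b (inord 7))^-1. Proof. by rewrite /bdual inordK. Qed.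
Lemma bd4 : bdual b (inord 4) = (b (inord 0))^-1. Proof. by rewrite /bdual inordK. Qed.
Lemma bd5 : bdual b (inord 5) = (b (inord 1))^-1. Proof. by rewrite /bdual inordK. Qed.
Lemma bd6 : bdual b (inord 6) = (b (inord 2))^-1. Proof. by rewrite /bdual inordK. Qed.
Lemma bd7 : bdual b (inord 7) = (b (inord 3))^-1. Proof. by rewrite /bdual inordK. Qed.

Lemma qpar_dual : qpar (bdual b) = q.
Proof.
rewrite /qpar bd0 bd1 bd2 bd3 bd4 bd5 bd6 bd7.
have := hb; move=> h; have h0 := h (inord 0); have h1 := h (inord 1); have h2 := h (inord 2); have h3 := h (inord 3).
have h4 := h (inord 4); have h5 := h (inord 5); have h6 := h (inord 6); have h7 := h (inord 7).
by field; rewrite ?h0 ?h1 ?h2 ?h3 ?h4 ?h5 ?h6 ?h7 ?oner_neq0.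
Qed.

Lemma lampar_dual : lampar L^-1 (bdual b) = (q * lam)^-1.
Proof.
rewrite /lampar /qpar ?bd0 ?bd1 ?bd2 ?bd3 ?bd4 ?bd5 ?bd6 ?bd7.
have := hb; move=> h; have h0 := h (inord 0); have h1 := h (inord 1); have h2 := h (inord 2); have h3 := h (inord 3).
have h4 := h (inord 4); have h5 := h (inord 5); have h6 := h (inord 6); have h7 := h (inord 7).
by field; rewrite ?h0 ?h1 ?h2 ?h3 ?h4 ?h5 ?h6 ?h7 ?hL ?oner_neq0 ?invr_eq0 ?hL.
Qed.


Lemma q_neq0 : q != 0.
Proof.
have h0 := hb (inord 0); have h1 := hb (inord 1); have h2 := hb (inord 2); have h3 := hb (inord 3).
have h4 := hb (inord 4); have h5 := hb (inord 5); have h6 := hb (inord 6); have h7 := hb (inord 7).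
apply: mulf_neq0; last rewrite invr_eq0; by rewrite !mulf_eq0 !negb_or ?h0 ?h1 ?h2 ?h3 ?h4 ?h5 ?h6 ?h7.
Qed.
Lemma lam_neq0 : lam != 0.
Proof.
have h0 := hb (inord 0); have h1 := hb (inord 1); have h2 := hb (inord 2); have h3 := hb (inord 3).
apply: mulf_neq0; [exact: expf_neq0 | rewrite invr_eq0]; by rewrite !mulf_eq0 !negb_or h0 h1 h2 h3.
Qed.

Lemma cst5 (a c d e g : K) : cst a * cst c * cst d * cst e * cst g = cst (a * c * d * e * g).
Proof. by rewrite !cstM. Qed.
Lemma cst7 (a a' c d e g : K) :
  cst a ^+ 3 * cst a' ^+ 4 * cst c * cst d * cst e * cst g = cst (a ^+ 3 * a' ^+ 4 * c * d * e * g).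
Proof. by rewrite -!cst_exp -!cstM. Qed.
Lemma monoT2 (x y : K) : mono (x * y) 1 1 = cst x * cst y * (Am * Bm).
Proof. by rewrite monoT expr1 cstM. Qed.
Lemma monoT0 (x : K) : mono x 0 0 = cst x. Proof. by []. Qed.

Lemma sym_sol (ft gt u v u' v' : PS) :
  ft = Bm * u -> gt = Bm * u' -> u * v = 1 -> u' * v' = 1 ->
  PSeq1 q B' ft gt (scl q lam ft) -> PSeq2 q B' gt (scl q lam ft) (scl q lam gt) ->
  PSeq1 q B (Am * v) (Am * v') (scl q lam (Am * v)) /\
  PSeq2 q B (Am * v') (scl q lam (Am * v)) (scl q lam (Am * v')).
Proof.
move=> hft hgt huv hu D1 D2.
have h0 := hb (inord 0); have h1 := hb (inord 1); have h2 := hb (inord 2); have h3 := hb (inord 3).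
have h4 := hb (inord 4); have h5 := hb (inord 5); have h6 := hb (inord 6); have h7 := hb (inord 7).
have hB14 : B 0%N * B 1%N * B 2%N * B 3%N != 0 by rewrite !mulf_eq0 !negb_or h0 h1 h2 h3.
have hB58 : B 4%N * B 5%N * B 6%N * B 7%N != 0 by rewrite !mulf_eq0 !negb_or h4 h5 h6 h7.
have hlam : lam != 0 by apply: mulf_neq0; [apply: expf_neq0 | rewrite invr_eq0].
have hq : q != 0 by apply: mulf_neq0; [|rewrite invr_eq0].
pose su := scl q lam u; pose sv := scl q lam v; pose su' := scl q lam u'; pose sv' := scl q lam v'.
have hsu : su * sv = 1 by rewrite /su /sv -sclM // huv scl1.
have hsu' : su' * sv' = 1 by rewrite /su' /sv' -sclM // hu scl1.
have cA : q ^+ 1 * lam ^ (1%:Z - 0%:Z) * 1 = q * lam by rewrite expr1 subr0 expr1z mulr1.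
have cB : q ^+ 0 * lam ^ (0%:Z - 1%:Z) * 1 = lam^-1 by rewrite expr0 mul1r mulr1 sub0r -exprnN expr1.
have esf : scl q lam (Am * v) = cst (q * lam) * Am * sv by rewrite sclM // /Am scl_mono cA monoA.
have esg : scl q lam (Am * v') = cst (q * lam) * Am * sv' by rewrite sclM // /Am scl_mono cA monoA.
have esft : scl q lam ft = cst lam^-1 * Bm * su by rewrite hft sclM // /Bm scl_mono cB monoB.
have esgt : scl q lam gt = cst lam^-1 * Bm * su' by rewrite hgt sclM // /Bm scl_mono cB monoB.
have Hq : cst q = cst (q * lam) * cst lam^-1 by rewrite -cstM -mulrA mulfV ?mulr1.
have Hr : cst (q * lam) = cst lam * cst q by rewrite -cstM mulrC.
have Hl : cst lam * cst lam^-1 = 1 by rewrite -cstM mulfV ?cst1.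
have Hb k : (k < 8)%N -> cst (B k) * cst (B k)^-1 = 1 by move=> _; rewrite -cstM mulfV ?cst1.
split.
- rewrite /PSeq1 !monoT cst1 !mul1r !expr0 !mulr1 !expr1.
  apply/eqP; rewrite -subr_eq0; apply/eqP; apply: Bm4_cancel.
  rewrite (@sym1 _ Am Bm (Am * Bm) (Am * v) (Am * v') (scl q lam (Am * v)) ft gt (scl q lam ft)
     u v u' v' su sv (cst q) (cst (q * lam)) (cst lam^-1) (cst lam)
     (cst (B 0%N)) (cst (B 1%N)) (cst (B 2%N)) (cst (B 3%N)) (cst (B 4%N)) (cst (B 5%N)) (cst (B 6%N)) (cst (B 7%N))
     (cst (B 0%N)^-1) (cst (B 1%N)^-1) (cst (B 2%N)^-1) (cst (B 3%N)^-1) (cst (B 4%N)^-1) (cst (B 5%N)^-1) (cst (B 6%N)^-1) (cst (B 7%N)^-1))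
     ?Hb //.
  move: D1; rewrite /PSeq1 !monoT cst1 !mul1r !expr0 !mulr1 !expr1 bd0 bd1 bd2 bd3 bd4 bd5 bd6 bd7 => ->.
  rewrite (cst5 (q * lam)) (cst5 lam).
  rewrite (_ : q * lam * B 4%N * B 5%N * B 6%N * B 7%N = lam * B 0%N * B 1%N * B 2%N * B 3%N).
    by rewrite subrr mulr0.
  by rewrite /qpar /lampar; field; rewrite ?h0 ?h1 ?h2 ?h3 ?h4 ?h5 ?h6 ?h7 ?oner_neq0.
- rewrite /PSeq2 !monoT0 (monoT (q ^+ 2)) cst_exp !(monoT2 (B _)^-1) !monoT ?cst1 ?mul1r ?expr0 ?mulr1.
  apply/eqP; rewrite -subr_eq0; apply/eqP; apply: Bm4_cancel.
  rewrite (@sym2 _ Am Bm (Am * Bm) (Am * v') (scl q lam (Am * v)) (scl q lam (Am * v')) gt (scl q lam ft) (scl q lam gt)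
     v' sv sv' su su' (cst q) (cst (q * lam)) (cst lam^-1) (cst lam)
     (cst (B 0%N)) (cst (B 1%N)) (cst (B 2%N)) (cst (B 3%N)) (cst (B 4%N)) (cst (B 5%N)) (cst (B 6%N)) (cst (B 7%N))
     (cst (B 0%N)^-1) (cst (B 1%N)^-1) (cst (B 2%N)^-1) (cst (B 3%N)^-1) (cst (B 4%N)^-1) (cst (B 5%N)^-1) (cst (B 6%N)^-1) (cst (B 7%N)^-1) u')
     ?Hb //.
  move: D2; rewrite /PSeq2 bd0 bd1 bd2 bd3 bd4 bd5 bd6 bd7 !invrK.
  rewrite !monoT0 (monoT (q ^+ 2)) cst_exp !(monoT2 (B _)) !monoT ?cst1 ?mul1r ?expr0 ?mulr1 => ->.
  rewrite (cst7 (q * lam) lam) (cst7 lam (q * lam)).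
  rewrite (_ : (q * lam) ^+ 3 * lam ^+ 4 * (B 4%N)^-1 * (B 5%N)^-1 * (B 6%N)^-1 * (B 7%N)^-1 =
               lam ^+ 3 * (q * lam) ^+ 4 * (B 0%N)^-1 * (B 1%N)^-1 * (B 2%N)^-1 * (B 3%N)^-1).
    by rewrite subrr mulr0.
  by rewrite /qpar /lampar; field; rewrite ?h0 ?h1 ?h2 ?h3 ?h4 ?h5 ?h6 ?h7 ?oner_neq0.
Qed.

End Main.

Section Bridge.
Variable K : fieldType.
Local Notation PS := (fps (fps K)).

Lemma qPA1_PS (L : K) (b : 'I_8 -> K) (F G : ser K) : qPA1 L b F G ->
  PSeq1 (qpar b) (fun k : nat => b (inord k)) (toPS F) (toPS G) (scl (qpar b) (lampar L b) (toPS F)) /\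
  PSeq2 (qpar b) (fun k : nat => b (inord k)) (toPS G) (scl (qpar b) (lampar L b) (toPS F)) (scl (qpar b) (lampar L b) (toPS G)).
Proof.
rewrite /qPA1 /= => -[e1 e2]; split.
  by move: (congr1 (@toPS K) e1); rewrite !(toPS_smul, toPS_ssub, toPS_smon, toPS_sshift).
by move: (congr1 (@toPS K) e2); rewrite !(toPS_smul, toPS_ssub, toPS_smon, toPS_sshift).
Qed.

Lemma PSeq1_swap q B (f g sf : PS) : PSeq1 q B f g sf -> PSeq1 q B (swap f) (swap g) (swap sf).
Proof. by rewrite /PSeq1 => /(congr1 (@swap K)); rewrite !(swapM, swapB, swap_mono). Qed.
Lemma PSeq2_swap q B (g sf sg : PS) : PSeq2 q B g sf sg -> PSeq2 q B (swap g) (swap sf) (swap sg).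
Proof. by rewrite /PSeq2 => /(congr1 (@swap K)); rewrite !(swapM, swapB, swap_mono). Qed.

Definition shB (X : PS) : PS := fun n w => X n w.+1.
Lemma shBE (X : PS) : (forall n, X n 0%N = 0) -> X = Bm * shB X.
Proof.
move=> h; apply/funext=> n; apply/funext=> w; rewrite /Bm mono_mulE /shB /=.
by case: w => [|w]; rewrite ?h //= mul1r subn0 subn1.
Qed.

Lemma PS_inv (u : PS) (c : K) : u 0%N 0%N * c = 1 -> exists v : PS, u * v = 1.
Proof.
move=> h; have [c' hc'] := fps_unit h.
exact: (fps_unit hc').
Qed.

Lemma PS_mul00 (u v : PS) : (u * v) 0%N 0%N = u 0%N 0%N * v 0%N 0%N.
Proof. by rewrite PS_mulE !big_ord1. Qed.

Lemma AmE (v : PS) n w : (Am * v) n w = if (0 < n)%N then v n.-1 w else 0.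
Proof. by rewrite /Am mono_mulE subn0 subn1 mul1r; case: n. Qed.

Lemma lead_Am (u v : PS) (a : K) : a != 0 -> u * v = 1 -> u 0%N 0%N = a -> (Am * v) 1%N 0%N = a^-1.
Proof.
move=> ha huv hu; rewrite AmE /=.
have := congr1 (fun X : PS => X 0%N 0%N) huv; rewrite PS_mul00 hu /= => h.
have h' : a * v 0%N 0%N = 1 := h.
by rewrite -[v 0%N 0%N]mul1r -(mulVf ha) -mulrA h' mulr1.
Qed.
Lemma Am0 (v : PS) w : (Am * v) 0%N w = 0.
Proof. by rewrite AmE. Qed.

Lemma final_eq (F F' : ser K) (u v : PS) : toPS F = Am * v -> swap (toPS F') = Bm * u -> u * v = 1 ->
  toPS (smul F (sinv F')) = toPS (tser K).
Proof.
move=> hF hF' huv; rewrite toPS_smul toPS_sinv hF hF' /tser toPS_smon monoT cst1 mul1r expr1.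
by rewrite mulrACA [v * u]mulrC huv mulr1.
Qed.
End Bridge.

Lemma mvar_neq0 n k : (k < n)%N -> mvar n k != 0.
Proof.
elim: n k => [//|m IH] [|k] hk /=; first by rewrite polyX_eq0.
by rewrite polyC_eq0 IH.
Qed.

Lemma Lgen_neq0 : Lgen != 0.
Proof. by rewrite /Lgen /tofracK tofrac_eq0 mvar_neq0. Qed.

Lemma bgen_neq0 i : bgen i != 0.
Proof. by rewrite /bgen /tofracK tofrac_eq0 mvar_neq0 //; exact: ltn_ord i. Qed.

Lemma scaleXn_inj (R : idomainType) (a b : R) m k : a != 0 -> b != 0 ->
  a *: 'X^m = b *: 'X^k :> {poly R} -> m = k /\ a = b.
Proof.
move=> ha hb e.
have hs := congr1 (fun p : {poly R} => size p) e; rewrite !size_scale // !size_polyXn in hs.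
case: hs => hmk; split => //.
have := congr1 (fun p : {poly R} => p`_m) e.
by rewrite !coefZ !coefXn hmk eqxx !mulr1.
Qed.

Lemma split_eq (R : idomainType) (a b : R) m k : a != 0 -> b != 0 ->
  a%:P * 'X^m = b%:P * 'X^k :> {poly R} -> m = k /\ a = b.
Proof. by rewrite !mul_polyC; apply: scaleXn_inj. Qed.

Definition c14 : mpoly 8 := mvar 8 0 * mvar 8 1 * mvar 8 2 * mvar 8 3.
Definition c58 : mpoly 8 := mvar 8 4 * mvar 8 5 * mvar 8 6 * mvar 8 7.
Definition e123 : mpoly 7 := mvar 7 0 * mvar 7 1 * mvar 7 2.
Definition e4567 : mpoly 7 := mvar 7 3 * mvar 7 4 * mvar 7 5 * mvar 7 6.

Lemma mvarS n k : mvar n.+1 k.+1 = (mvar n k)%:P. Proof. by []. Qed.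
Lemma mvar0 n : mvar n.+1 0 = 'X. Proof. by []. Qed.
Lemma c14E : c14 = e123%:P * 'X.
Proof. by rewrite /c14 /e123 mvar0 !mvarS !rmorphM [RHS]mulrC !mulrA. Qed.
Lemma c58E : c58 = e4567%:P.
Proof. by rewrite /c58 /e4567 !mvarS !rmorphM. Qed.
Lemma e123_neq0 : e123 != 0.
Proof. exact: (mulf_neq0 (mulf_neq0 (@mvar_neq0 7 0 erefl) (@mvar_neq0 7 1 erefl)) (@mvar_neq0 7 2 erefl)). Qed.
Lemma e4567_neq0 : e4567 != 0.
Proof. exact: (mulf_neq0 (mulf_neq0 (mulf_neq0 (@mvar_neq0 7 3 erefl) (@mvar_neq0 7 4 erefl)) (@mvar_neq0 7 5 erefl)) (@mvar_neq0 7 6 erefl)). Qed.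
Lemma c14_neq0 : c14 != 0.
Proof. exact: (mulf_neq0 (mulf_neq0 (mulf_neq0 (@mvar_neq0 8 0 erefl) (@mvar_neq0 8 1 erefl)) (@mvar_neq0 8 2 erefl)) (@mvar_neq0 8 3 erefl)). Qed.
Lemma c58_neq0 : c58 != 0.
Proof. exact: (mulf_neq0 (mulf_neq0 (mulf_neq0 (@mvar_neq0 8 4 erefl) (@mvar_neq0 8 5 erefl)) (@mvar_neq0 8 6 erefl)) (@mvar_neq0 8 7 erefl)). Qed.

Lemma bgenE k : (k < 8)%N -> bgen (inord k) = tofracK ((mvar 8 k)%:P).
Proof. by move=> hk; rewrite /bgen inordK. Qed.
Lemma b0E : bgen (inord 0) = tofracK ((mvar 8 0)%:P). Proof. exact: bgenE. Qed.
Lemma b1E : bgen (inord 1) = tofracK ((mvar 8 1)%:P). Proof. exact: bgenE. Qed.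
Lemma b2E : bgen (inord 2) = tofracK ((mvar 8 2)%:P). Proof. exact: bgenE. Qed.
Lemma b3E : bgen (inord 3) = tofracK ((mvar 8 3)%:P). Proof. exact: bgenE. Qed.
Lemma b4E : bgen (inord 4) = tofracK ((mvar 8 4)%:P). Proof. exact: bgenE. Qed.
Lemma b5E : bgen (inord 5) = tofracK ((mvar 8 5)%:P). Proof. exact: bgenE. Qed.
Lemma b6E : bgen (inord 6) = tofracK ((mvar 8 6)%:P). Proof. exact: bgenE. Qed.
Lemma b7E : bgen (inord 7) = tofracK ((mvar 8 7)%:P). Proof. exact: bgenE. Qed.
Lemma polyC4 (R : nzRingType) (a b c d : R) : (a * b * c * d)%:P = a%:P * b%:P * c%:P * d%:P.
Proof. by rewrite !polyCM. Qed.
Lemma tofrac4 (R : idomainType) (a b c d : R) :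
  FracField.tofrac (a * b * c * d) = FracField.tofrac a * FracField.tofrac b * FracField.tofrac c * FracField.tofrac d.
Proof. by rewrite !tofracM. Qed.

Lemma c14T : tofracK (c14%:P) = bgen (inord 0) * bgen (inord 1) * bgen (inord 2) * bgen (inord 3).
Proof.
rewrite /c14 polyC4 /tofracK tofrac4.
by rewrite b0E b1E b2E b3E.
Qed.
Lemma c58T : tofracK (c58%:P) = bgen (inord 4) * bgen (inord 5) * bgen (inord 6) * bgen (inord 7).
Proof.
rewrite /c58 polyC4 /tofracK tofrac4.
by rewrite b4E b5E b6E b7E.
Qed.
Lemma qpar_gen : qpar bgen = tofracK (c14%:P) / tofracK (c58%:P).
Proof. rewrite /qpar; congr (_ / _); [exact: (esym c14T) | exact: (esym c58T)]. Qed.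
Lemma lampar_gen : lampar Lgen bgen = tofracK ('X ^+ 2) / tofracK (c14%:P).
Proof. rewrite /lampar; congr (_ / _); [by rewrite /Lgen /tofracK tofracXn | exact: (esym c14T)]. Qed.

Ltac fld := field; try (repeat (apply/andP; split); assumption).

Lemma fcrossA (F : fieldType) (p s x : F) n k : p != 0 -> s != 0 ->
  (p / s) ^+ n * (x ^+ 2 / p) ^+ k = (p / s) * (x ^+ 2 / p) ->
  p ^+ n * (x ^+ 2) ^+ k * (s * p) = p * x ^+ 2 * (s ^+ n * p ^+ k).
Proof.
move=> hp hs; rewrite !expr_div_n => E.
have hpn : p ^+ n != 0 by rewrite expf_neq0.
have hpk : p ^+ k != 0 by rewrite expf_neq0.
have hsn : s ^+ n != 0 by rewrite expf_neq0.
have := congr1 (fun z => z * (s ^+ n * p ^+ k * (s * p))) E.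
rewrite (_ : p ^+ n / s ^+ n * ((x ^+ 2) ^+ k / p ^+ k) * (s ^+ n * p ^+ k * (s * p)) =
             p ^+ n * (x ^+ 2) ^+ k * (s * p)); last by fld.
by move=> ->; fld.
Qed.

Lemma fcrossB (F : fieldType) (p s x : F) n k : p != 0 -> s != 0 -> x != 0 ->
  (p / s) ^+ n * ((x ^+ 2 / p) ^+ k)^-1 = (p / s) * (x ^+ 2 / p) ->
  p ^+ n * p ^+ k * s = (x ^+ 2) ^+ k.+1 * s ^+ n.
Proof.
move=> hp hs hx; rewrite !expr_div_n => E.
have hpn : p ^+ n != 0 by rewrite expf_neq0.
have hpk : p ^+ k != 0 by rewrite expf_neq0.
have hsn : s ^+ n != 0 by rewrite expf_neq0.
have hxk : (x ^+ 2) ^+ k != 0 by rewrite !expf_neq0.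
have := congr1 (fun z => z * (s ^+ n * (x ^+ 2) ^+ k * s)) E.
rewrite (_ : p ^+ n / s ^+ n * ((x ^+ 2) ^+ k / p ^+ k)^-1 * (s ^+ n * (x ^+ 2) ^+ k * s) =
             p ^+ n * p ^+ k * s); last by fld.
by move=> ->; rewrite [(x ^+ 2) ^+ k.+1]exprS; fld.
Qed.

Lemma crossA (R : idomainType) (P S X : R) n k : P != 0 -> S != 0 ->
  (FracField.tofrac P / FracField.tofrac S) ^+ n * (FracField.tofrac (X ^+ 2) / FracField.tofrac P) ^+ k =
  (FracField.tofrac P / FracField.tofrac S) * (FracField.tofrac (X ^+ 2) / FracField.tofrac P) ->
  P ^+ n * (X ^+ 2) ^+ k * (S * P) = P * X ^+ 2 * (S ^+ n * P ^+ k).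
Proof.
move=> hP hS; rewrite tofracXn => E; apply/eqP; rewrite -tofrac_eq; apply/eqP.
rewrite !tofracM !tofracXn.
by apply: fcrossA E; rewrite tofrac_eq0.
Qed.

Lemma crossB (R : idomainType) (P S X : R) n k : P != 0 -> S != 0 -> X != 0 ->
  (FracField.tofrac P / FracField.tofrac S) ^+ n * ((FracField.tofrac (X ^+ 2) / FracField.tofrac P) ^+ k)^-1 =
  (FracField.tofrac P / FracField.tofrac S) * (FracField.tofrac (X ^+ 2) / FracField.tofrac P) ->
  P ^+ n * P ^+ k * S = (X ^+ 2) ^+ k.+1 * S ^+ n.
Proof.
move=> hP hS hX; rewrite tofracXn => E; apply/eqP; rewrite -tofrac_eq; apply/eqP.
rewrite !tofracM !tofracXn.
by apply: fcrossB E; rewrite tofrac_eq0.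
Qed.

Lemma normA (R : idomainType) (p s : R) n k :
  p%:P ^+ n * ('X ^+ 2) ^+ k * (s%:P * p%:P) = p%:P * 'X ^+ 2 * (s%:P ^+ n * p%:P ^+ k) :> {poly R} ->
  (p ^+ n * (s * p))%:P * 'X ^+ (2 * k) = (p * (s ^+ n * p ^+ k))%:P * 'X ^+ 2.
Proof.
move=> E; rewrite !polyCM !polyC_exp exprM.
transitivity (p%:P ^+ n * ('X ^+ 2) ^+ k * (s%:P * p%:P)); first by ring.
by rewrite E; ring.
Qed.

Lemma normB (R : idomainType) (e f : R) n : e != 0 -> f != 0 ->
  (e%:P * 'X) ^+ n * (f%:P * (e%:P * 'X)) = (e%:P * 'X) * (f%:P ^+ n * (e%:P * 'X) ^+ 1) :> {poly R} ->
  n = 1%N.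
Proof.
move=> he hf E.
have hX : e%:P * 'X != 0 :> {poly R} by rewrite mulf_neq0 ?polyC_eq0 ?polyX_eq0.
have E2 : (e ^+ n * f)%:P * 'X ^+ n = (f ^+ n * e)%:P * 'X ^+ 1 :> {poly R}.
  apply: (mulIf hX); rewrite !polyCM !polyC_exp.
  transitivity ((e%:P * 'X) ^+ n * (f%:P * (e%:P * 'X))); first by rewrite exprMn; ring.
  by rewrite E expr1; ring.
by case: (split_eq _ _ E2); rewrite ?mulf_neq0 ?expf_neq0.
Qed.

Lemma normC (R : idomainType) (p s : R) n k : p != 0 -> s != 0 ->
  p%:P ^+ n * p%:P ^+ k * s%:P = ('X ^+ 2) ^+ k.+1 * s%:P ^+ n :> {poly R} -> False.
Proof.
move=> hp hs E.
have E2 : (p ^+ n * p ^+ k * s)%:P * 'X ^+ 0 = (s ^+ n)%:P * 'X ^+ (2 * k.+1) :> {poly R}.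
  by rewrite expr0 mulr1 !polyCM !polyC_exp E exprM mulrC.
by case: (split_eq _ _ E2); rewrite ?mulf_neq0 ?expf_neq0.
Qed.

Lemma chi_gen n w : (0 < n)%N -> ~~ ((n == 1%N) && (w == 0%N)) ->
  qpar bgen ^+ n * lampar Lgen bgen ^ (n%:Z - w%:Z) != qpar bgen * lampar Lgen bgen.
Proof.
move=> hn hnw; apply/eqP; rewrite qpar_gen lampar_gen /tofracK.
have h14 : c14%:P != 0 :> mpoly 9 by rewrite polyC_eq0 c14_neq0.
have h58 : c58%:P != 0 :> mpoly 9 by rewrite polyC_eq0 c58_neq0.
case: (leqP w n) => hw.
  have -> : n%:Z - w%:Z = (n - w)%N%:Z by lia.
  move=> E; have H := normA (crossA h14 h58 E).
  have nz1 := mulf_neq0 (expf_neq0 n c14_neq0) (mulf_neq0 c58_neq0 c14_neq0).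
  have nz2 := mulf_neq0 c14_neq0 (mulf_neq0 (expf_neq0 n c58_neq0) (expf_neq0 (n - w) c14_neq0)).
  case: (split_eq nz1 nz2 H) => hk heq.
  have hk1 : (n - w = 1)%N by lia.
  rewrite hk1 in heq; move: heq; rewrite c14E c58E => heq.
  have hn1 := normB e123_neq0 e4567_neq0 heq.
  by move: hnw hk1; rewrite hn1; lia.
have -> : n%:Z - w%:Z = - ((w - n)%N%:Z) by lia.
rewrite -exprnN => E.
have hX : 'X != 0 :> mpoly 9 by rewrite polyX_eq0.
have H := crossB h14 h58 hX E.
exact: (normC c14_neq0 c58_neq0 H).
Qed.

Theorem mainTheorem6 (F G F' G' : ser Kgen) :
  is_f0plus Lgen bgen F G ->
  is_f0plus Lgen^-1 (bdual bgen) F' G' ->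
  smul F (sinv F') = tser Kgen /\ smul G (sinv G') = tser Kgen.
Proof.
move=> [[F0 [sF [G0 [sG hq]]]] [F11 G11]] [[F0' [sF' [G0' [sG' hq']]]] [F11' G11']].
have hL := Lgen_neq0. have hb := bgen_neq0.
have hq0 := q_neq0 hb.
have hlam := lam_neq0 hL hb.
have [e1 e2] := qPA1_PS hq.
have [d1 d2] := qPA1_PS hq'.
rewrite (qpar_dual hb) (lampar_dual hL hb) in d1 d2.
have d1s := PSeq1_swap d1. have d2s := PSeq2_swap d2.
rewrite !(swap_scl _ hq0 hlam erefl) in d1s d2s.
set ft := swap (toPS F') in d1s d2s; set gt := swap (toPS G') in d1s d2s.
have hft : ft = Bm * shB ft by apply: shBE => n; exact: F0'.
have hgt : gt = Bm * shB gt by apply: shBE => n; exact: G0'.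
have eF : shB ft 0%N 0%N = 1 by exact: F11'.
have eG : shB gt 0%N 0%N = Lgen^-1 by exact: G11'.
have u00 : shB ft 0%N 0%N * 1 = 1 := etrans (mulr1 _) eF.
have u'00 : shB gt 0%N 0%N * Lgen = 1 := etrans (congr1 (fun x => x * Lgen) eG) (mulVf hL).
have [v huv] := PS_inv u00. have [v' huv'] := PS_inv u'00.
have [S1 S2] := sym_sol hL hb hft hgt huv huv' d1s d2s.
have f21 : (Am * v) 1%N 0%N = 1 := etrans (lead_Am (oner_neq0 _) huv eF) (invr1 _).
have g21 : (Am * v') 1%N 0%N = Lgen := etrans (lead_Am (invr_neq0 hL) huv' eG) (invrK Lgen).
have f0 : forall w, toPS F 0%N w = 0 by move=> w; exact: F0.
have g0 : forall w, toPS G 0%N w = 0 by move=> w; exact: G0.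
have f1 : toPS F 1%N 0%N = 1 by exact: F11.
have g1 : toPS G 1%N 0%N = Lgen by exact: G11.
have [hf hg] := uniq_sol hL hb chi_gen e1 e2 S1 S2 f0 g0 (@Am0 _ v) (@Am0 _ v') f1 g1 f21 g21.
split.
  exact: (toPS_inj (supp_smul _ _) (supp_smon _ _) (final_eq hf hft huv)).
exact: (toPS_inj (supp_smul _ _) (supp_smon _ _) (final_eq hg hgt huv')).
Qed.
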